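(* Let $n$ be a positive integer and let $f$ be the function on $\mathbb{F}_{2^n}$ defined by $f(0)=1$, $f(1)=0$ and $f(x)=x^{-1}$ for $x\notin\{0,1\}$ (i.e. $f=Inv\circ(0,1)$). For $a,b\in\mathbb{F}_{2^n}$ let $\nabla_f(a,b)$ denote the number of $x\in\mathbb{F}_{2^n}$ such that $f(x+a+b)+f(x+a)+f(x+b)+f(x)=0$. Then \[ \nabla_f(a,b)= \begin{cases} 2^n, &\text{if } ab(a+b)=0,\\ 8, &\text{if } a\ne b \text{ and } a^3+a+1=b^3+b+1=0,\\ 4, &\text{if } ab(a+b)\ne 0 \text{ and } [\,a,b\in\mathbb{F}_4^* \text{ or } (a,b)\in S\,],\\ 0, &\text{otherwise,} \end{cases} \] where \[ S=\{(a,b)\in\mathbb{F}_{2^n}^*\times\mathbb{F}_{2^n}^* : a^2+b^2+ab\in\{1,\,ab(a+b)\}\}\setminus\{(a,b)\in\mathbb{F}_{2^3}^*\times\mathbb{F}_{2^3}^* : a^3+a+1=b^3+b+1=0\}. \]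
   Context: $Inv(x)=x^{2^n-2}$ is the multiplicative inverse map on $\mathbb{F}_{2^n}$ (with $Inv(0)=0$), and $(0,1)$ denotes the transposition of $\mathbb{F}_{2^n}$ swapping $0$ and $1$; $Inv\circ(0,1)$ means $x\mapsto Inv((0,1)(x))$. $\mathbb{F}_4^*$ and $\mathbb{F}_{2^3}^*$ denote the nonzero elements of the subfields of order $4$ and $8$ of $\mathbb{F}_{2^n}$ (when these subfields exist; conditions referring to them are void otherwise). $\mathbb{F}_{2^n}^*=\mathbb{F}_{2^n}\setminus\{0\}$. *)

(* Defs.v *)
From HB Require Import structures.
From mathcomp Require Import all_boot all_order all_algebra all_field.
Set Implicit Arguments. Unset Strict Implicit. Unset Printing Implicit Defensive.
Import GRing.Theory.
Local Open Scope ring_scope.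

(* F is a finite field; in the theorem we assume #|F| = 2^n, so F is (a copy of) F_{2^n}. *)

Definition inv01 (F : finFieldType) (x : F) : F :=
  if x == 0 then 1 else if x == 1 then 0 else x^-1.

Definition nabla (F : finFieldType) (f : F -> F) (a b : F) : nat :=
  #|[set x : F | f (x + a + b) + f (x + a) + f (x + b) + f x == 0]|.

(* x lies in the nonzero part of the subfield of order 2^k of F_{2^n};
   this subfield exists iff k %| n, and then it is {x | x^(2^k) = x}. *)
Definition in_subfield_star (F : finFieldType) (n k : nat) (x : F) : bool :=
  [&& (k %| n)%N, x ^+ (2 ^ k) == x & x != 0].

Definition cubic_root (F : finFieldType) (x : F) : bool :=
  x ^+ 3 + x + 1 == 0.

Definition S_set (F : finFieldType) (n : nat) (a b : F) : bool :=
  [&& a != 0, b != 0,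
      (a ^+ 2 + b ^+ 2 + a * b == 1) || (a ^+ 2 + b ^+ 2 + a * b == a * b * (a + b))
    & ~~ [&& in_subfield_star n 3 a, in_subfield_star n 3 b, cubic_root a & cubic_root b]].

Definition nabla_value (F : finFieldType) (n : nat) (a b : F) : nat :=
  if a * b * (a + b) == 0 then (2 ^ n)%N
  else if (a != b) && cubic_root a && cubic_root b then 8%N
  else if (in_subfield_star n 2 a && in_subfield_star n 2 b) || S_set n a b then 4%N
  else 0%N.

(* Main.v *)
Require Import Defs.
From mathcomp Require Import all_boot all_order all_algebra all_field.
From mathcomp Require Import ring.
Set Implicit Arguments. Unset Strict Implicit. Unset Printing Implicit Defensive.
Import GRing.Theory.
Local Open Scope ring_scope.

Lemma c2 (F : comRingType) (h : (2%:R : F) = 0) (L R K : F) :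
  L = R + 2%:R * K -> L = R.
Proof. by move=> ->; rewrite h mul0r addr0. Qed.

Lemma eq_add0 (F : fieldType) (h : 2 \in [pchar F]) (y z : F) :
  (y + z == 0) = (y == z).
Proof. by rewrite addr_eq0 oppr_pchar2. Qed.

Lemma addKc2 (F : fieldType) (h : 2 \in [pchar F]) (y z : F) : y + z + z = y.
Proof. by rewrite -addrA addrr_pchar2 // addr0. Qed.

Definition inV (F : fieldType) (a b x : F) : bool :=
  [|| x == 0, x == a, x == b | x == a + b].

Lemma inV_add (F : fieldType) (h : 2 \in [pchar F]) (a b u v : F) :
  inV a b u -> inV a b v -> inV a b (u + v).
Proof.
have h2 := pcharf0 h.
rewrite /inV => /or4P [] /eqP -> /or4P [] /eqP ->; apply/or4P;
first [ apply: Or41; apply/eqP; solve [ring: h2]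
      | apply: Or42; apply/eqP; solve [ring: h2]
      | apply: Or43; apply/eqP; solve [ring: h2]
      | apply: Or44; apply/eqP; solve [ring: h2] ].
Qed.
Definition dlt (F : fieldType) (y : F) : F := if (y == 0) || (y == 1) then 1 else 0.

Lemma inv01E (F : finFieldType) (h : 2 \in [pchar F]) (y : F) : inv01 y = y^-1 + dlt y.
Proof.
rewrite /inv01 /dlt; case: eqP => [->|_]; first by rewrite invr0 add0r.
case: eqP => [->|_]; first by rewrite invr1 addrr_pchar2.
by rewrite addr0.
Qed.

Lemma dltE (F : fieldType) (y : F) : y != 0 -> dlt y = (y == 1)%:R.
Proof. by rewrite /dlt => /negbTE ->; case: eqP. Qed.

Lemma count4 (T : eqType) (y1 y2 y3 y4 c : T) :
  y1 != y2 -> y1 != y3 -> y1 != y4 -> y2 != y3 -> y2 != y4 -> y3 != y4 ->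
  ((y1 == c) + (y2 == c) + (y3 == c) + (y4 == c))%N = [|| y1 == c, y2 == c, y3 == c | y4 == c] :> nat.
Proof.
move=> n12 n13 n14 n23 n24 n34.
case: (eqVneq y1 c) => [e1|_]; first by subst c; rewrite eq_sym (negbTE n12) eq_sym (negbTE n13) eq_sym (negbTE n14).
case: (eqVneq y2 c) => [e2|_]; first by subst c; rewrite eq_sym (negbTE n23) eq_sym (negbTE n24).
case: (eqVneq y3 c) => [e3|_]; first by subst c; rewrite eq_sym (negbTE n34).
by case: (eqVneq y4 c).
Qed.

Lemma count3 (T : eqType) (y1 y2 y3 c : T) :
  y1 != y2 -> y1 != y3 -> y2 != y3 ->
  ((y1 == c) + (y2 == c) + (y3 == c))%N = [|| y1 == c, y2 == c | y3 == c] :> nat.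
Proof.
move=> n12 n13 n23.
case: (eqVneq y1 c) => [e1|_]; first by subst c; rewrite eq_sym (negbTE n12) eq_sym (negbTE n13).
case: (eqVneq y2 c) => [e2|_]; first by subst c; rewrite eq_sym (negbTE n23).
by case: (eqVneq y3 c).
Qed.

Lemma addr_eqself (F : fieldType) (h : 2 \in [pchar F]) (y z : F) : (y + z == y) = (z == 0).
Proof. by rewrite -(eq_add0 h (y + z) y) addrAC addrr_pchar2 // add0r. Qed.

Lemma swap1 (F : fieldType) (h : 2 \in [pchar F]) (u v : F) : (u + 1 == v) = (u + v == 1).
Proof. by rewrite -(eq_add0 h (u + 1)) -(eq_add0 h (u + v)) addrAC. Qed.

Definition Dn (F : finFieldType) (a b x : F) : F :=
  inv01 (x + a + b) + inv01 (x + a) + inv01 (x + b) + inv01 x.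

Lemma Dshift (F : finFieldType) (h : 2 \in [pchar F]) (a b x : F) :
  Dn a b (x + a) = Dn a b x /\ Dn a b (x + b) = Dn a b x.
Proof.
rewrite /Dn; split.
  rewrite (addrAC x a a) !addKc2 //. by ring.
rewrite (addrAC x b a) !addKc2 //. by ring.
Qed.

Definition Qf (F : fieldType) (a b : F) := a ^+ 2 + b ^+ 2 + a * b.
Definition Pf (F : fieldType) (a b : F) := a * b * (a + b).
Definition cA (F : fieldType) (a b : F) :=
  if inV a b 1 then Qf a b == 0 else Qf a b == Pf a b.
Definition cB (F : fieldType) (a b : F) := ~~ inV a b 1 && (Qf a b == 1).

Lemma divr_eq1 (F : fieldType) (p q : F) : q != 0 -> (p / q == 1) = (p == q).
Proof.
move=> nq; apply/eqP/eqP => [e|->]; last by rewrite divff.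
by rewrite -(divfK nq p) e mul1r.
Qed.

Lemma divr_eq0' (F : fieldType) (p q : F) : q != 0 -> (p / q == 0) = (p == 0).
Proof. by move=> nq; rewrite mulf_eq0 invr_eq0 (negbTE nq) orbF. Qed.

Lemma key (F : finFieldType) (h : 2 \in [pchar F]) (a b x : F) :
  a != 0 -> b != 0 -> a + b != 0 ->
  (Dn a b x == 0) = (inV a b x && cA a b) || (inV a b (x + 1) && cB a b).
Proof.
move=> na nb nab.
have h2 := pcharf0 h.
have nP : Pf a b != 0 by rewrite /Pf !mulf_neq0.
have cl : inV a b x -> inV a b (x + 1) -> inV a b 1.
  move=> h1 h3; have := inV_add h h1 h3.
  by rewrite (_ : x + (x + 1) = 1) //; ring: h2.
case: (boolP (inV a b x)) => hx /=.
  have -> : Dn a b x = Dn a b 0.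
    have [s1 s2] := Dshift h a b 0; rewrite !add0r in s1 s2.
    move: hx; rewrite /inV => /or4P [] /eqP -> //.
    by rewrite (Dshift h a b a).2 s1.
  have -> : Dn a b 0 = Qf a b / Pf a b + (~~ inV a b 1)%:R.
    rewrite /Dn !add0r !inv01E // invr0.
    have -> : (a + b)^-1 + dlt (a + b) + (a^-1 + dlt a) + (b^-1 + dlt b) + (0 + dlt 0)
       = ((a + b)^-1 + a^-1 + b^-1) + (dlt (a + b) + dlt a + dlt b + dlt 0) by ring.
    congr (_ + _).
      rewrite (_ : (a + b)^-1 + a^-1 + b^-1 = (a * b + b * (a + b) + a * (a + b)) / Pf a b).
        congr (_ / _); apply: (c2 h2 (K := a * b)); rewrite /Qf; ring.
      rewrite /Pf; field; rewrite na nb nab //.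
    rewrite (dltE nab) (dltE na) (dltE nb) /dlt eqxx /=.
    rewrite -!natrD count3; last first.
    - by rewrite -(eq_add0 h).
    - by rewrite -(eq_add0 h) addrK_pchar2.
    - by rewrite -(eq_add0 h) addrC addrA addrr_pchar2 // add0r.
    rewrite /inV oner_eq0 /= ![1 == _]eq_sym.
    by case: (a + b == 1); case: (a == 1); case: (b == 1); rewrite /= ?add0r ?addrr_pchar2.
  rewrite eq_add0 //.
  have -> : inV a b (x + 1) && cB a b = false.
    by rewrite /cB; case: (boolP (inV a b (x+1))) => //= /(cl hx) ->.
  rewrite orbF /cA; case: (boolP (inV a b 1)) => _ /=.
    by rewrite divr_eq0'.
  by rewrite divr_eq1.
have /and4P [n0 na' nb' nab'] : [&& x != 0, x != a, x != b & x != a + b] by move: hx; rewrite /inV !negb_or.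
have nx1 : x + a != 0 by rewrite eq_add0.
have nx2 : x + b != 0 by rewrite eq_add0.
have nx3 : x + a + b != 0 by rewrite -addrA eq_add0.
have nPi : x * (x + a) * (x + b) * (x + a + b) != 0 by rewrite !mulf_neq0.
have -> : Dn a b x = Pf a b / (x * (x + a) * (x + b) * (x + a + b)) + (inV a b (x + 1))%:R.
  rewrite /Dn !inv01E //.
  have -> : (x + a + b)^-1 + dlt (x + a + b) + ((x + a)^-1 + dlt (x + a)) + ((x + b)^-1 + dlt (x + b)) + (x^-1 + dlt x)
       = ((x + a + b)^-1 + (x + a)^-1 + (x + b)^-1 + x^-1) + (dlt (x + a + b) + dlt (x + a) + dlt (x + b) + dlt x) by ring.
  congr (_ + _).
    rewrite (_ : (x + a + b)^-1 + (x + a)^-1 + (x + b)^-1 + x^-1 =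
       (x*(x+a)*(x+b) + x*(x+b)*(x+a+b) + x*(x+a)*(x+a+b) + (x+a)*(x+b)*(x+a+b)) / (x * (x + a) * (x + b) * (x + a + b))).
      congr (_ / _); apply: (c2 h2 (K := (x*b^+2) + (3%:R*x*a*b) + (x*a^+2) + (3%:R*x^+2*b) + (3%:R*x^+2*a) + (2%:R*x^+3))); rewrite /Pf; ring.
    field; rewrite n0 nx1 nx2 nx3 //.
  rewrite !dltE // -!natrD count4; last first.
  - by rewrite addr_eqself.
  - by rewrite addr_eqself.
  - by rewrite (inj_eq (addrI x)) -(eq_add0 h).
  - by rewrite -addrA addr_eqself.
  - by rewrite -!addrA (inj_eq (addrI x)) -(eq_add0 h) addrK_pchar2.
  - by rewrite addr_eqself.
  rewrite /inV !swap1 //.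
  rewrite (_ : (x + 0 == 1) = (x == 1)); last by rewrite addr0.
  rewrite (_ : (x + (a + b) == 1) = (x + a + b == 1)); last by rewrite addrA.
  by case: (x + a + b == 1); case: (x == 1); rewrite /= ?orbT.
rewrite eq_add0 //.
case: (boolP (inV a b (x + 1))) => hx1 /=; last first.
  by rewrite divr_eq0' // (negbTE nP).
rewrite divr_eq1 //.
have nV1 : ~~ inV a b 1.
  apply/negP => i1; have := inV_add h hx1 i1.
  rewrite addKc2 // /inV (negbTE n0) (negbTE na') (negbTE nb') (negbTE nab') //.
rewrite /cB nV1 /=.
have -> : x * (x + a) * (x + b) * (x + a + b) = 1 * (1 + a) * (1 + b) * (1 + a + b).
  move: hx1; rewrite /inV => /or4P [] /eqP.
  - by move/eqP; rewrite eq_add0 // => /eqP ->.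
  - move=> e; have -> : x = a + 1 by rewrite -e addKc2.
    apply: (c2 h2 (K := (2%:R*a) + (3%:R*a*b) + (a*b^+2) + (6%:R*a^+2) + (6%:R*a^+2*b) + (a^+2*b^+2) + (6%:R*a^+3) + (3%:R*a^+3*b) + (2%:R*a^+4))); ring.
  - move=> e; have -> : x = b + 1 by rewrite -e addKc2.
    apply: (c2 h2 (K := (2%:R*b) + (6%:R*b^+2) + (6%:R*b^+3) + (2%:R*b^+4) + (3%:R*a*b) + (6%:R*a*b^+2) + (3%:R*a*b^+3) + (a^+2*b) + (a^+2*b^+2))); ring.
  - move=> e; have -> : x = a + b + 1 by rewrite -e addKc2.
    apply: (c2 h2 (K := (2%:R*b) + (6%:R*b^+2) + (6%:R*b^+3) + (2%:R*b^+4) + (2%:R*a) + (12%:R*a*b) + (19%:R*a*b^+2) + (9%:R*a*b^+3) + (6%:R*a^+2) + (19%:R*a^+2*b) + (14%:R*a^+2*b^+2) + (6%:R*a^+3) + (9%:R*a^+3*b) + (2%:R*a^+4))); ring.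
rewrite (c2 h2 (L := 1 * (1 + a) * (1 + b) * (1 + a + b)) (R := Pf a b + Qf a b + 1) (K := b + a + a * b)); last by rewrite /Pf /Qf; ring.
by rewrite eq_sym -addrA addr_eqself // eq_add0.
Qed.

Lemma card4 (T : finType) (p q r s : T) :
  p != q -> p != r -> p != s -> q != r -> q != s -> r != s ->
  #|[set x | [|| x == p, x == q, x == r | x == s]]| = 4%N.
Proof.
move=> npq npr nps nqr nqs nrs.
have -> : [set x | [|| x == p, x == q, x == r | x == s]] = p |: (q |: (r |: [set s])).
  by apply/setP => x; rewrite !inE.
rewrite !cardsU1 cards1 !inE !negb_or npq npr nps nqr nqs nrs.
by [].
Qed.

Lemma shiftc (F : fieldType) (h : 2 \in [pchar F]) (x c v : F) : (x + c == v) = (x == v + c).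
Proof. by rewrite -(eq_add0 h (x + c)) -(eq_add0 h x) addrA addrAC. Qed.

Lemma cardV (F : finFieldType) (h : 2 \in [pchar F]) (a b c : F) :
  a != 0 -> b != 0 -> a + b != 0 -> #|[set x : F | inV a b (x + c)]| = 4%N.
Proof.
move=> na nb nab.
have -> : [set x : F | inV a b (x + c)] =
   [set x | [|| x == 0 + c, x == a + c, x == b + c | x == a + b + c]].
  by apply/setP => x; rewrite !inE /inV !shiftc.
have nab' : a != b by rewrite -(eq_add0 h).
apply: card4; rewrite (inj_eq (addIr c)) //.
- by rewrite eq_sym.
- by rewrite eq_sym.
- by rewrite eq_sym.
- by rewrite eq_sym -(eq_add0 h) addrC addrA addrr_pchar2 // add0r.
- by rewrite eq_sym -(eq_add0 h) addrK_pchar2.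
Qed.

Lemma count_main (F : finFieldType) (h : 2 \in [pchar F]) (a b : F) :
  a != 0 -> b != 0 -> a + b != 0 ->
  nabla (@inv01 F) a b = ((if cA a b then 4 else 0) + (if cB a b then 4 else 0))%N.
Proof.
move=> na nb nab.
rewrite /nabla.
have -> : [set x | inv01 (x + a + b) + inv01 (x + a) + inv01 (x + b) + inv01 x == 0]
   = [set x | (inV a b (x + 0) && cA a b) || (inV a b (x + 1) && cB a b)].
  apply/setP => x; rewrite !inE addr0; exact: (key h x na nb nab).
case: (boolP (cA a b)) => hA; case: (boolP (cB a b)) => hB /=.
- rewrite (_ : [set x : F | _] = [set x | inV a b (x + 0)] :|: [set x | inV a b (x + 1)]); last first.
    by apply/setP => x; rewrite !inE !andbT.
  rewrite cardsU !cardV //.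
  have -> : [set x | inV a b (x + 0)] :&: [set x | inV a b (x + 1)] = set0.
    apply/setP => x; rewrite !inE addr0.
    apply/negP => /andP [i0 i1].
    move: hB; rewrite /cB => /andP [/negP nV _]; apply: nV.
    have := inV_add h i0 i1; rewrite (_ : x + (x + 1) = 1) //.
    by rewrite addrA addrr_pchar2 // add0r.
  by rewrite cards0.
- rewrite (_ : [set x : F | _] = [set x | inV a b (x + 0)]) ?cardV //.
    by apply/setP => x; rewrite !inE andbT andbF orbF.
- rewrite (_ : [set x : F | _] = [set x | inV a b (x + 1)]) ?cardV //.
    by apply/setP => x; rewrite !inE andbT andbF.
- rewrite (_ : [set x : F | _] = set0) ?cards0 //.
  by apply/setP => x; rewrite !inE !andbF.
Qed.

Lemma one_neq_c2 (F : fieldType) (h : 2 \in [pchar F]) : (1 : F) + 1 != 1.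
Proof. by rewrite addrr_pchar2 // eq_sym oner_eq0. Qed.

Lemma alg_both (F : finFieldType) (h : 2 \in [pchar F]) (a b : F) :
  a != 0 -> b != 0 -> a + b != 0 ->
  (cA a b && cB a b) = (cubic_root a && cubic_root b).
Proof.
move=> na nb nab; have h2 := pcharf0 h.
apply/idP/idP.
  rewrite /cA /cB; case: (inV a b 1); rewrite /= ?andbF // => /andP [/eqP eP /eqP eQ].
  have eP1 : Pf a b = 1 by rewrite -eP.
  rewrite /cubic_root; apply/andP; split; apply/eqP.
    rewrite (c2 h2 (L := a ^+ 3 + a + 1) (R := a * (1 - Qf a b) + (1 - Pf a b))
        (K := (a*b^+2) + (a^+2*b) + (a^+3))); last by rewrite /Qf /Pf; ring.
    by rewrite eQ eP1 !subrr mulr0 addr0.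
  rewrite (c2 h2 (L := b ^+ 3 + b + 1) (R := b * (1 - Qf a b) + (1 - Pf a b))
      (K := (b^+3) + (a*b^+2) + (a^+2*b))); last by rewrite /Qf /Pf; ring.
  by rewrite eQ eP1 !subrr mulr0 addr0.
rewrite /cubic_root => /andP [/eqP ca /eqP cb].
have eQ : Qf a b = 1.
  have e : (a + b) * (Qf a b + 1) = 0.
    rewrite (c2 h2 (L := (a + b) * (Qf a b + 1)) (R := (a ^+ 3 + a + 1) + (b ^+ 3 + b + 1))
      (K := - (1%:R) + (a*b^+2) + (a^+2*b))); last by rewrite /Qf; ring.
    by rewrite ca cb addr0.
  move/eqP: e; rewrite mulf_eq0 (negbTE nab) /= eq_add0 //; by move/eqP.
have eP : Pf a b = 1.
  rewrite (c2 h2 (L := Pf a b) (R := 1 + a * (Qf a b - 1) + (a ^+ 3 + a + 1))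
    (K := - (1%:R) - (a^+3))); last by rewrite /Pf /Qf; ring.
  by rewrite eQ ca subrr mulr0 !addr0.
have nV : ~~ inV a b 1.
  rewrite /inV oner_eq0 /=; apply/negP => /or3P [] /eqP e.
  - by move/eqP: ca; rewrite -e expr1n -addrA addrr_pchar2 // addr0 oner_eq0.
  - by move/eqP: cb; rewrite -e expr1n -addrA addrr_pchar2 // addr0 oner_eq0.
  - have : Qf a b = 1 + 1.
      rewrite (c2 h2 (L := Qf a b) (R := (a + b) ^+ 2 + Pf a b / (a + b)) (K := - (a * b))).
        by rewrite eP -e expr1n divr1.
      rewrite /Pf mulfK //; rewrite /Qf; ring.
    by rewrite eQ => /eqP; rewrite eq_sym (negbTE (one_neq_c2 h)).
by rewrite /cA /cB (negbTE nV) /= eQ eP eqxx.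
Qed.

Lemma pow2mod3 (n : nat) : (2 ^ n %% 3 = if odd n then 2 else 1)%N.
Proof.
elim: n => [//|n IH].
rewrite expnS -modnMmr IH /=; by case: (odd n).
Qed.

Lemma F4_cases (F : finFieldType) (h : 2 \in [pchar F]) (n : nat) (x : F) :
  in_subfield_star n 2 x -> x = 1 \/ x ^+ 2 + x + 1 = 0.
Proof.
have h2 := pcharf0 h.
rewrite /in_subfield_star => /and3P [_ /eqP e4 nx].
have e3 : x ^+ 3 = 1.
  apply: (mulIf nx); rewrite mul1r -exprSr; exact: e4.
have : (x + 1) * (x ^+ 2 + x + 1) = 0.
  rewrite (c2 h2 (L := (x + 1) * (x ^+ 2 + x + 1)) (R := x ^+ 3 + 1) (K := x + x ^+ 2)); last by ring.
  by rewrite e3 addrr_pchar2.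
move/eqP; rewrite mulf_eq0 => /orP [|/eqP -> ]; last by right.
by rewrite eq_add0 // => /eqP; left.
Qed.

Lemma root_F4 (F : finFieldType) (h : 2 \in [pchar F]) (n : nat) (x : F) :
  #|F| = (2 ^ n)%N -> x ^+ 2 + x + 1 = 0 -> in_subfield_star n 2 x.
Proof.
move=> cardF r; have h2 := pcharf0 h.
have nx : x != 0.
  by apply/negP => /eqP ex; move: r; rewrite ex expr0n /= !add0r => /eqP; rewrite oner_eq0.
have e4 : x ^+ (2 ^ 2) = x.
  rewrite (_ : x ^+ (2 ^ 2) = x + (x ^+ 2 + x + 1) * (x ^+ 2 - x)); last by ring.
  by rewrite r mul0r addr0.
have e3 : x ^+ 3 = 1.
  rewrite (_ : x ^+ 3 = 1 + (x - 1) * (x ^+ 2 + x + 1)); last by ring.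
  by rewrite r mulr0 addr0.
rewrite /in_subfield_star e4 eqxx nx /= andbT dvdn2.
apply/negP => hon.
have := expf_card x; rewrite cardF -(expr_mod _ e3) pow2mod3 hon => e2.
have x1 : x = 1 by apply: (mulIf nx); rewrite mul1r -expr2.
by move: r; rewrite x1 expr1n addrr_pchar2 // add0r => /eqP; rewrite oner_eq0.
Qed.

Lemma F4_1 (F : finFieldType) (n : nat) : (2 %| n)%N -> in_subfield_star n 2 (1 : F).
Proof. by move=> d; rewrite /in_subfield_star d expr1n eqxx oner_eq0. Qed.

Lemma F4_dvd (F : finFieldType) (n : nat) (x : F) : in_subfield_star n 2 x -> (2 %| n)%N.
Proof. by case/and3P. Qed.

Lemma F4both (F : finFieldType) (h : 2 \in [pchar F]) (n : nat) (a b : F) :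
  a != 0 -> b != 0 -> a + b != 0 ->
  in_subfield_star n 2 a -> in_subfield_star n 2 b -> Qf a b = 0 /\ inV a b 1.
Proof.
move=> na nb nab fa fb; have h2 := pcharf0 h.
case: (F4_cases h fa) => [ea|ra]; case: (F4_cases h fb) => [eb|rb].
- by move: nab; rewrite ea eb addrr_pchar2 // eqxx.
- split; last by rewrite /inV ea eqxx orbT.
  by rewrite /Qf ea -rb; ring.
- split; last by rewrite /inV eb eqxx !orbT.
  by rewrite /Qf eb -ra; ring.
- have eab : a + b = 1.
    have : (a + b) * (a + b + 1) = 0.
      rewrite (c2 h2 (L := (a + b) * (a + b + 1)) (R := (a ^+ 2 + a + 1) + (b ^+ 2 + b + 1)) (K := a * b - 1)); last by ring.
      by rewrite ra rb addr0.
    move/eqP; rewrite mulf_eq0 (negbTE nab) /= eq_add0 //; by move/eqP.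
  split; last by rewrite /inV eab eqxx !orbT.
  have eb : b = a + 1 by rewrite -eab addrA addrr_pchar2 // add0r.
  rewrite /Qf eb.
  rewrite -ra; apply: (c2 h2 (K := a + a ^+ 2)); ring.
Qed.

Lemma alg_rest (F : finFieldType) (h : 2 \in [pchar F]) (n : nat) (a b : F) :
  #|F| = (2 ^ n)%N -> a != 0 -> b != 0 -> a + b != 0 ->
  (cA a b || cB a b) =
  (in_subfield_star n 2 a && in_subfield_star n 2 b) || ((Qf a b == 1) || (Qf a b == Pf a b)).
Proof.
move=> cardF na nb nab; have h2 := pcharf0 h.
rewrite /cA /cB.
case: (boolP (inV a b 1)) => hV /=; last first.
  have -> : in_subfield_star n 2 a && in_subfield_star n 2 b = false.
    apply/negP => /andP [fa fb]; have [_ i1] := F4both h na nb nab fa fb.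
    by move: hV; rewrite i1.
  by rewrite orbC.
rewrite orbF.
have eQ : Qf a b = Pf a b + 1.
  have e0 : 1 * (1 + a) * (1 + b) * (1 + a + b) = 0.
    move: hV; rewrite /inV oner_eq0 /= => /or3P [] /eqP e.
    - by rewrite -e addrr_pchar2 // mulr0 !mul0r.
    - by rewrite -e addrr_pchar2 // mulr0 mul0r.
    - by rewrite -addrA -e addrr_pchar2 // mulr0.
  have e1 : Pf a b + Qf a b + 1 = 0.
    by rewrite -e0; symmetry; apply: (c2 h2 (K := b + a + a * b)); rewrite /Pf /Qf; ring.
  apply/eqP; rewrite -(eq_add0 h); apply/eqP.
  by rewrite -e1; ring.
have -> : (Qf a b == 1) = false.
  by rewrite eQ -{2}(add0r 1) (inj_eq (addIr 1)); apply/negbTE; rewrite /Pf !mulf_neq0.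
have -> : (Qf a b == Pf a b) = false.
  by rewrite eQ addr_eqself // oner_eq0.
rewrite !orbF.
apply/idP/idP; last first.
  by case/andP => fa fb; have [-> _] := F4both h na nb nab fa fb.
move=> /eqP q0.
move: hV; rewrite /inV oner_eq0 /= => /or3P [] /eqP e.
- have rb : b ^+ 2 + b + 1 = 0 by rewrite -q0 /Qf -e; ring.
  have fb := root_F4 h cardF rb.
  by rewrite -e F4_1 ?(F4_dvd fb).
- have ra : a ^+ 2 + a + 1 = 0 by rewrite -q0 /Qf -e; ring.
  have fa := root_F4 h cardF ra.
  by rewrite -e fa F4_1 ?(F4_dvd fa).
- have eb : b = a + 1 by rewrite e addrA addrr_pchar2 // add0r.
  have ra : a ^+ 2 + a + 1 = 0.
    rewrite -q0 /Qf eb; apply: (c2 h2 (K := - (a + a ^+ 2))); ring.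
  have rb : b ^+ 2 + b + 1 = 0.
    rewrite -ra eb; apply: (c2 h2 (K := 1 + a)); ring.
  by rewrite (root_F4 h cardF ra) (root_F4 h cardF rb).
Qed.

Lemma S_setE (F : finFieldType) (n : nat) (a b : F) :
  a != 0 -> b != 0 -> ~~ (cubic_root a && cubic_root b) ->
  S_set n a b = (Qf a b == 1) || (Qf a b == Pf a b).
Proof.
move=> na nb nc; rewrite /S_set na nb /=.
case: (cubic_root a) nc; case: (cubic_root b) => //= _; by rewrite !andbF andbT.
Qed.

Unset Implicit Arguments.

Theorem theorem3p1 (F : finFieldType) (n : nat) :
  (0 < n)%N -> #|F| = (2 ^ n)%N ->
  forall a b : F, nabla (@inv01 F) a b = nabla_value n a b.
Proof.
move=> n0 cardF a b.
have h : 2 \in [pchar F] := card_finPcharP cardF (isT : prime 2).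
have h2 := pcharf0 h.
rewrite /nabla_value.
case: (boolP (a * b * (a + b) == 0)) => hP.
  rewrite /nabla -cardF -cardsT; apply: eq_card => x; rewrite !inE.
  move: hP; rewrite !mulf_eq0 => /orP [/orP [] | ] /eqP e.
  - by rewrite e !addr0; apply/eqP; ring: h2.
  - by rewrite e !addr0; apply/eqP; ring: h2.
  - have eb : b = a by apply/eqP; rewrite -(eq_add0 h) addrC e.
    by rewrite eb !(addKc2 h) (addrr_pchar2 h) eqxx.
move: hP; rewrite !mulf_eq0 !negb_or => /andP [/andP [na nb] nab].
rewrite (count_main h na nb nab).
have -> : (a != b) = true by rewrite -(eq_add0 h).
rewrite /= -(alg_both h na nb nab).
case: (boolP (cA a b && cB a b)) => hAB.
  by case/andP: hAB => -> ->.
have nc : ~~ (cubic_root a && cubic_root b) by rewrite -(alg_both h na nb nab).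
rewrite (S_setE n na nb nc) -(alg_rest h cardF na nb nab).
by move: hAB; case: (cA a b); case: (cB a b).
Qed.
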